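(* Let $R\subseteq\mathbb N$ be sparse, $n\in\mathbb N^+$, and $\mathbf A=(A_1,\dots,A_n)$ an $n$-tuple of operators on $R$ with $A_i\neq_R0$ for all $i$. Then there is $\Delta_0$ such that for every $\Delta\ge\Delta_0$ and all distinct $z,w\in R^n_\Delta$, letting $e=\min\{i: z_i\ne w_i\}$, we have $\mathbf A\cdot z>\mathbf A\cdot w$ if and only if ($z_e>w_e$ and $A_e>_R0$) or ($z_e<w_e$ and $A_e<_R0$). In particular, $z\mapsto\mathbf A\cdot z$ is injective on $R^n_\Delta$.
   Context: Let $R\subseteq\mathbb N$ be infinite, enumerated increasingly as $(r_n)_{n\in\mathbb N}$; $\sigma:R\to R$ is the successor map $\sigma(r_n)=r_{n+1}$ and $\sigma^k$ its $k$-fold iterate ($\sigma^0=\mathrm{id}$). An operator on $R$ is a function $R\to\mathbb Z$, $z\mapsto a_m\sigma^m(z)+\dots+a_0\sigma^0(z)$ with $a_i\in\mathbb Z$. For an operator $A$: $A=_R0$ if $Az=0$ for all $z\in R$; $A>_R0$ (resp. $A<_R0$) if $Az>0$ (resp. $Az<0$) for all but finitely many $z\in R$. $R$ is sparse if every operator $A$ satisfies (S1) $A=_R0$ or $A>_R0$ or $A<_R0$; and (S2) if $A>_R0$ then there is $\Delta\in\mathbb N$ with $A(\sigma^\Delta z)>z$ for all $z\in R$. For an $n$-tuple of operators $\mathbf A$ and $z\in R^n$, $\mathbf A\cdot z=A_1z_1+\dots+A_nz_n$. For $\tilde R\subseteq R$ and $\Delta\in\mathbb N$, $\tilde R^n_\Delta=\{(z_1,\dots,z_n)\in\tilde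 R^n: z_i\ge\sigma^\Delta z_{i+1}\text{ for }1\le i\le n\}$ where $z_{n+1}:=\min\tilde R$. *)

(* Defs.v *)
From mathcomp Require Import all_boot all_order all_algebra.
Set Implicit Arguments. Unset Strict Implicit. Unset Printing Implicit Defensive.
Import Order.TTheory GRing.Theory Num.Theory.
Local Open Scope ring_scope.

(* A set R ⊆ ℕ (infinite) is represented by its increasing enumeration
   r : nat -> nat, i.e. R = { r k | k }, r_k = r k.  An element z = r k of R
   is handled through its index k; then σ^j z = r (k + j).
   An operator a_m σ^m + ... + a_0 σ^0 is the coefficient list
   [:: a_0; ...; a_m] : seq int. *)

Definition increasing (r : nat -> nat) : Prop := forall k, (r k < r k.+1)%N.

Definition apply_op (r : nat -> nat) (a : seq int) (k : nat) : int :=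
  \sum_(i < size a) a`_i * ((r (k + i)%N)%:Z).

Definition op_eq0 r a : Prop := forall k, apply_op r a k = 0.
Definition op_pos r a : Prop := exists N, forall k, (N <= k)%N -> 0 < apply_op r a k.
Definition op_neg r a : Prop := exists N, forall k, (N <= k)%N -> apply_op r a k < 0.

Definition sparse (r : nat -> nat) : Prop :=
  forall a : seq int,
    (op_eq0 r a \/ op_pos r a \/ op_neg r a) /\
    (op_pos r a -> exists D : nat, forall k, ((r k)%:Z < apply_op r a (k + D)%N)).

(* index of z_{i} for i : nat, with z_{n+1} := min R = r 0 (index 0) *)
Definition ext_idx n (z : 'I_n -> nat) (k : nat) : nat :=
  if insub k is Some i then z i else 0%N.

(* z ∈ R^n_Δ (with R~ = R), z given by the indices of its entries:
   z_i >= σ^Δ z_{i+1} for all 1 <= i <= n *)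
Definition inRnD (r : nat -> nat) n (D : nat) (z : 'I_n -> nat) : Prop :=
  forall i : 'I_n, (r (ext_idx z i.+1 + D) <= r (z i))%N.

Definition dotA (r : nat -> nat) n (A : 'I_n -> seq int) (z : 'I_n -> nat) : int :=
  \sum_(i < n) apply_op r (A i) (z i).

(* Main.v *)
Require Import Defs.
From mathcomp Require Import all_boot all_order all_algebra.
From mathcomp Require Import zify.
Import Order.TTheory GRing.Theory Num.Theory.
Local Open Scope ring_scope.

Section S.
Variable r : nat -> nat.
Hypothesis Hr : increasing r.

Lemma r_mono i j : (i <= j)%N -> (r i <= r j)%N.
Proof.
move=> /subnK <-; elim: (j - i)%N => [|d IH] //=.
rewrite addSn; have := Hr (d + i)%N; lia.
Qed.

Lemma r_lt i j : (i < j)%N -> (r i < r j)%N.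
Proof. move=> H; have := Hr i; have := @r_mono i.+1 j H; lia. Qed.

Lemma r_ge k : (k <= r k)%N.
Proof. elim: k => [//|k IH]; have := Hr k; lia. Qed.

Lemma r_leP i j : (r i <= r j)%N = (i <= j)%N.
Proof.
apply/idP/idP; last exact: r_mono.
by apply: contraLR; rewrite -!ltnNge; apply: r_lt.
Qed.

Lemma r_ltP i j : (r i < r j)%N = (i < j)%N.
Proof. by rewrite !ltnNge r_leP. Qed.

Lemma apply_ext a k N : (size a <= N)%N ->
  apply_op r a k = \sum_(0 <= i < N) a`_i * (r (k + i))%:Z.
Proof.
move=> HN; rewrite /apply_op -(big_mkord xpredT (fun i => a`_i * (r (k + i))%:Z)).
rewrite (big_cat_nat (leq0n _) HN) /= [X in _ = _ + X]big1_seq ?addr0 //.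
move=> i /andP[_]; rewrite mem_index_iota => /andP[Hi _].
by rewrite nth_default ?mul0r.
Qed.

Lemma apply_mk f N k :
  apply_op r (mkseq f N) k = \sum_(0 <= i < N) f i * (r (k + i))%:Z.
Proof.
rewrite (@apply_ext _ _ N) ?size_mkseq //.
by apply: eq_big_nat => i /andP[_ Hi]; rewrite nth_mkseq.
Qed.

Definition shiftop t (a : seq int) : seq int := mkseq (fun i => if (t <= i)%N then a`_(i - t) else 0) (t + size a).
Definition subop (a b : seq int) : seq int := mkseq (fun i => a`_i - b`_i) (maxn (size a) (size b)).
Definition negop (a : seq int) : seq int := mkseq (fun i => - a`_i) (size a).

Lemma apply_shift t a k : apply_op r (shiftop t a) k = apply_op r a (k + t).
Proof.
rewrite apply_mk (apply_ext _ _ _ (leqnn _)).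
rewrite (big_cat_nat (leq0n t) (leq_addr _ _)) /= big1_seq ?add0r; last first.
  by move=> i /andP[_]; rewrite mem_index_iota => /andP[_ Hi]; rewrite leqNgt Hi mul0r.
rewrite -{1}(add0n t) big_addn addKn; apply: eq_big_nat => i _.
by rewrite leq_addl addnK (addnC i) addnA.
Qed.

Lemma apply_sub a b k : apply_op r (subop a b) k = apply_op r a k - apply_op r b k.
Proof.
rewrite apply_mk (apply_ext _ _ _ (leq_maxl (size a) (size b))) (apply_ext _ _ _ (leq_maxr (size a) (size b))).
rewrite -sumrB; apply: eq_bigr => i _; by rewrite mulrBl.
Qed.

Lemma apply_neg a k : apply_op r (negop a) k = - apply_op r a k.
Proof.
rewrite apply_mk (apply_ext _ _ _ (leqnn _)) -sumrN; apply: eq_bigr => i _; by rewrite mulNr.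
Qed.

Lemma apply_cst (c : int) k : apply_op r [:: c] k = c * (r k)%:Z.
Proof. by rewrite /apply_op big_ord1 addn0. Qed.

Definition Cop (a : seq int) : nat := (\sum_(i < size a) absz (nth (0:int) a i))%N.

Lemma norm_apply a x : `|apply_op r a x| <= (Cop a)%:Z * (r (x + size a)%N)%:Z.
Proof.
rewrite /Cop /apply_op (big_morph Posz PoszD (erefl (Posz 0))) mulr_suml.
apply: le_trans (ler_norm_sum _ _ _) _; apply: ler_sum => i _.
rewrite normrM abszE.
have : (r (x + i) <= r (x + size a))%N by apply: r_mono => //; rewrite leq_add2l ltnW.
have : 0 <= `|a`_i| by [].
have -> : `|(r (x + i)%N)%:Z| = (r (x + i)%N)%:Z by [].

move=> H1 H2; apply: ler_wpM2l => //; by rewrite lez_nat.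
Qed.

Lemma growth a : sparse r -> op_pos r a ->
  forall K : nat, exists t, forall k, K%:Z * (r k)%:Z < apply_op r a (k + t)%N.
Proof.
move=> Hsp Hpos; elim=> [|K [t IH]].
  have [_ /(_ Hpos) [D HD]] := Hsp a.
  exists D => k; rewrite mul0r; apply: le_lt_trans (HD k); by [].
pose E := subop (shiftop t a) [:: K%:Z].
have HE k : apply_op r E k = apply_op r a (k + t)%N - K%:Z * (r k)%:Z.
  by rewrite apply_sub apply_shift apply_cst.
have [_ /(_ _) [|D HD]] := Hsp E.
  by exists 0%N => k _; rewrite HE subr_gt0.
exists (D + t)%N => k.
have := HD k; rewrite HE addnA.
have : (r k <= r (k + D))%N by apply: r_mono; rewrite leq_addr.
rewrite -lez_nat => H1 H2.
have : K%:Z * (r k)%:Z <= K%:Z * (r (k + D)%N)%:Z by apply: ler_wpM2l.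
move: H2; set u := apply_op _ _ _.
have -> : (K.+1)%:Z * (r k)%:Z = (r k)%:Z + K%:Z * (r k)%:Z.
  by rewrite -addn1 PoszD mulrDl mul1r addrC.
move: (K%:Z * (r k)%:Z) (K%:Z * (r (k + D)%N)%:Z) => p q. lia.
Qed.

Lemma not_bounded a : (exists D, forall k, (r k)%:Z < apply_op r a (k + D)%N) ->
  forall N c, ~ (forall k, (N <= k)%N -> apply_op r a k <= c).
Proof.
move=> [D HD] N c Hb.
pose k := (N + absz c)%N.
have H1 := HD k.
have H2 : apply_op r a (k + D)%N <= c by apply: Hb; rewrite /k -addnA leq_addr.
have H3 : (k <= r k)%N := r_ge k.
have H4 : c <= (absz c)%:Z by rewrite abszE ler_norm.
move: H1 H2 H3 H4; rewrite /k; set u := apply_op _ _ _; lia.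
Qed.

Lemma pos_neg_excl a : op_pos r a -> op_neg r a -> False.
Proof.
move=> [N HN] [N' HN']; have := HN (maxn N N') (leq_maxl _ _); have := HN' (maxn N N') (leq_maxr _ _).
set u := apply_op _ _ _; lia.
Qed.

Definition diffop a := subop (shiftop 1 a) a.

Lemma apply_diff a k : apply_op r (diffop a) k = apply_op r a k.+1 - apply_op r a k.
Proof. by rewrite apply_sub apply_shift addn1. Qed.

Lemma diff_pos a : sparse r -> op_pos r a -> op_pos r (diffop a).
Proof.
move=> Hsp Hpos; have [_ /(_ Hpos) HS2] := Hsp a.
have NB := @not_bounded a HS2.
have [[H0|[Hp|[N Hn]]] _] := Hsp (diffop a); last 2 first.
- exact: Hp.
- exfalso; apply: (NB N (apply_op r a N)) => k /subnK <-.
  elim: (k - N)%N => [|d IH] //; rewrite addSn.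
  have := Hn (d + N)%N (leq_addl _ _); rewrite apply_diff; move: IH.
  set u := apply_op _ _ _; set v := apply_op _ _ _; set w := apply_op _ _ _; lia.
- exfalso; apply: (NB 0%N (apply_op r a 0)) => k _.
  elim: k => [//|k IH].
  have := H0 k; rewrite apply_diff; move: IH.
  set u := apply_op _ _ _; set v := apply_op _ _ _; lia.
Qed.

Lemma neg_pos a : op_neg r a -> op_pos r (negop a).
Proof. by move=> [N HN]; exists N => k Hk; rewrite apply_neg oppr_gt0 HN. Qed.

Lemma diff_neg a k : apply_op r (diffop (negop a)) k = - apply_op r (diffop a) k.
Proof. rewrite !apply_diff !apply_neg; lia. Qed.

Lemma ext_ord n (z : 'I_n -> nat) (i : 'I_n) : ext_idx z i = z i.
Proof.
rewrite /ext_idx; case: insubP => [j _ /val_inj -> //|]; by rewrite ltn_ord.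
Qed.

Lemma ext_out n (z : 'I_n -> nat) k : (n <= k)%N -> ext_idx z k = 0%N.
Proof. by move=> H; rewrite /ext_idx insubN // -leqNgt. Qed.

Lemma rnd_step n D (z : 'I_n -> nat) : inRnD r D z ->
  forall k, (k < n)%N -> (ext_idx z k.+1 + D <= ext_idx z k)%N.
Proof.
move=> H k Hk; have := H (Ordinal Hk); rewrite r_leP /=.
by rewrite -(ext_ord _ z (Ordinal Hk)).
Qed.

Lemma rnd_chain n D (z : 'I_n -> nat) : inRnD r D z ->
  forall i j, (i < j)%N -> (j <= n)%N -> (ext_idx z j + D <= ext_idx z i)%N.
Proof.
move=> H i; elim=> [//|j IH] Hij Hjn.
have S := @rnd_step n D z H j Hjn.
case: (ltngtP i j) => [Hl|Hg|E].
- have := IH Hl (ltnW Hjn); lia.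
- lia.
- by rewrite E.
Qed.

Lemma rnd_geD n D (z : 'I_n -> nat) : inRnD r D z -> forall i : 'I_n, (D <= z i)%N.
Proof.
move=> H i; have := rnd_chain _ _ _ H _ _ (ltn_ord i) (leqnn n).
by rewrite ext_out // ext_ord.
Qed.

Lemma rnd_lt n D (z : 'I_n -> nat) : inRnD r D z ->
  forall i j : 'I_n, (i < j)%N -> (z j + D <= z i)%N.
Proof.
move=> H i j Hij; have := rnd_chain _ _ _ H _ _ Hij (ltnW (ltn_ord j)).
by rewrite !ext_ord.
Qed.

Lemma core n (A : 'I_n -> seq int) (Kc M T D : nat) (e : 'I_n) (z w : 'I_n -> nat) :
 (forall i x, `|apply_op r (A i) x| <= Kc%:Z * (r (x + M)%N)%:Z) ->
 (forall x, (T <= x)%N -> (2 * Kc%:Z * (r (x - T)%N)%:Z) *+ n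
     < apply_op r (A e) x.+1 - apply_op r (A e) x) ->
 (T + M < D)%N -> inRnD r D z -> inRnD r D w ->
 (forall i : 'I_n, (i < e)%N -> z i = w i) -> (w e < z e)%N ->
 dotA r A w < dotA r A z.
Proof.
move=> Hb Hg HD Hz Hw Hlt Hew.
set X := (z e - 1 - T)%N.
set c := 2 * Kc%:Z * (r X)%:Z.
have c0 : 0 <= c by rewrite /c; apply: mulr_ge0; [apply: mulr_ge0|].
have cn0 : 0 <= c *+ n by apply: mulrn_wge0.
have HweD := rnd_geD _ _ _ Hw e.
have Hmono : forall d x, (T <= x)%N -> apply_op r (A e) x <= apply_op r (A e) (x + d)%N.
  move=> d x Hx; elim: d => [|d IH]; first by rewrite addn0.
  apply: le_trans IH _; rewrite addnS.
  have := Hg (x + d)%N (leq_trans Hx (leq_addr _ _)).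
  move: (apply_op r (A e) (x + d)%N) (apply_op r (A e) (x + d).+1) => p q; lia.
have Hmain : c *+ n < apply_op r (A e) (z e) - apply_op r (A e) (w e).
  have HT : (T <= (z e).-1)%N by lia.
  have := Hg _ HT; rewrite prednK; last by lia.
  have -> : ((z e).-1 - T)%N = X by rewrite /X; lia.
  have HT2 : (T <= w e)%N by lia.
  have := Hmono ((z e).-1 - w e)%N (w e) HT2.
  have -> : (w e + ((z e).-1 - w e))%N = (z e).-1 by lia.
  move: (c *+ n) (apply_op r (A e) (z e)) (apply_op r (A e) (z e).-1) (apply_op r (A e) (w e)).
  move=> p q s t; lia.
have Htail : `|\sum_(i | i != e) (apply_op r (A i) (z i) - apply_op r (A i) (w i))| <= c *+ n.
  apply: le_trans (ler_norm_sum _ _ _) _.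
  apply: (@le_trans _ _ (\sum_(i < n) c)); last by rewrite sumr_const card_ord.
  apply: (@le_trans _ _ (\sum_(i < n | i != e) c)); last first.
    by rewrite [leRHS](bigD1 e) //= lerDr.
  apply: ler_sum => i Hie.
  case: (ltngtP i e) => [Hie2|Hei|Hie2]; last 1 first.
  - by move: Hie; rewrite (val_inj Hie2) eqxx.
  - by rewrite Hlt // subrr normr0.
  apply: le_trans (ler_normB _ _) _.
  have H1 := Hb i (z i); have H2 := Hb i (w i).
  have Hzi := rnd_lt _ _ _ Hz _ _ Hei; have Hwi := rnd_lt _ _ _ Hw _ _ Hei.
  have : (r (z i + M) <= r X)%N by apply: r_mono; rewrite /X; lia.
  have : (r (w i + M) <= r X)%N by apply: r_mono; rewrite /X; lia.
  rewrite -!lez_nat => H3 H4.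
  have : Kc%:Z * (r (z i + M)%N)%:Z <= Kc%:Z * (r X)%:Z by apply: ler_wpM2l.
  have : Kc%:Z * (r (w i + M)%N)%:Z <= Kc%:Z * (r X)%:Z by apply: ler_wpM2l.
  rewrite /c -mulrA; move: H1 H2.
  move: (apply_op r (A i) (z i)) (apply_op r (A i) (w i)) => p q.
  move: (Kc%:Z * (r (z i + M)%N)%:Z) (Kc%:Z * (r (w i + M)%N)%:Z) (Kc%:Z * (r X)%:Z).
  move=> u v t; lia.
rewrite -subr_gt0.
have -> : dotA r A z - dotA r A w = (apply_op r (A e) (z e) - apply_op r (A e) (w e)) +
   \sum_(i | i != e) (apply_op r (A i) (z i) - apply_op r (A i) (w i)).
  by rewrite /dotA -sumrB (bigD1 e).
move: Hmain Htail cn0.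
move: (c *+ n) (apply_op r (A e) (z e) - apply_op r (A e) (w e)) (\sum_(i | i != e) (apply_op r (A i) (z i) - apply_op r (A i) (w i))).
move=> p q s; lia.
Qed.

End S.

Lemma fin_all n (P : 'I_n -> nat -> Prop) :
  (forall i T T', P i T -> (T <= T')%N -> P i T') ->
  (forall i, exists T, P i T) -> exists T, forall i, P i T.
Proof.
move=> Hm He.
suff: forall m, exists T, forall i : 'I_n, (i < m)%N -> P i T.
  by move=> /(_ n) [T HT]; exists T => i; apply: HT.
elim=> [|m [T1 H1]]; first by exists 0%N.
case: (ltnP m n) => Hmn; last first.
  by exists T1 => i Hi; apply: H1; apply: leq_trans (ltn_ord i) Hmn.
have [T2 H2] := He (Ordinal Hmn).
exists (maxn T1 T2) => i; rewrite ltnS leq_eqVlt => /orP[/eqP Ei|Hi].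
  have -> : i = Ordinal Hmn by apply: val_inj.
  by apply: Hm H2 _; apply: leq_maxr.
by apply: Hm (H1 _ Hi) _; apply: leq_maxl.
Qed.

Definition G r n Kc (a : seq int) T := forall x, (T <= x)%N ->
  (2 * Kc%:Z * (r (x - T)%N)%:Z) *+ n < apply_op r a x.+1 - apply_op r a x.

Lemma G_mono r n Kc a T T' : increasing r -> G r n Kc a T -> (T <= T')%N -> G r n Kc a T'.
Proof.
move=> Hr HG HT x Hx; apply: le_lt_trans (HG x (leq_trans HT Hx)).
rewrite lerMn2r; apply/orP; right.
apply: ler_wpM2l; first by apply: mulr_ge0.
rewrite lez_nat; apply: (@r_mono r Hr); lia.
Qed.

Lemma G_ex r n Kc a : increasing r -> sparse r -> op_pos r a -> exists T, G r n Kc a T.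
Proof.
move=> Hr Hsp Hp.
have [t Ht] := @growth r Hr _ Hsp (@diff_pos r Hr a Hsp Hp) (Kc * 2 * n)%N.
exists t => x Hx; have := Ht (x - t)%N; rewrite subnK // apply_diff.
apply: le_lt_trans; rewrite -mulr_natr PoszM PoszM.
rewrite natz; nia.
Qed.

Lemma dotA_neg r n (A : 'I_n -> seq int) z :
  dotA r (fun i => negop (A i)) z = - dotA r A z.
Proof. by rewrite /dotA -sumrN; apply: eq_bigr => i _; rewrite apply_neg. Qed.

Lemma key r n (A : 'I_n -> seq int) (Kc M T D : nat) (e : 'I_n) (z w : 'I_n -> nat) :
 increasing r ->
 (forall i x, `|apply_op r (A i) x| <= Kc%:Z * (r (x + M)%N)%:Z) ->
 (op_pos r (A e) -> G r n Kc (A e) T) -> (op_neg r (A e) -> G r n Kc (negop (A e)) T) ->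
 (T + M < D)%N -> inRnD r D z -> inRnD r D w ->
 (forall i : 'I_n, (i < e)%N -> z i = w i) -> (w e < z e)%N ->
 (op_pos r (A e) -> dotA r A w < dotA r A z) /\ (op_neg r (A e) -> dotA r A z < dotA r A w).
Proof.
move=> Hr Hb Gp Gn HD Hz Hw Hag Hlt; split => H.
  exact: (@core r Hr n A Kc M T D e z w Hb (Gp H) HD Hz Hw Hag Hlt).
have Hb' : forall i x, `|apply_op r (negop (A i)) x| <= Kc%:Z * (r (x + M)%N)%:Z.
  by move=> i x; rewrite apply_neg normrN.
have := @core r Hr n (fun i => negop (A i)) Kc M T D e z w Hb' (Gn H) HD Hz Hw Hag Hlt.
by rewrite !dotA_neg ltrN2.
Qed.

Theorem mainTheorem6 (r : nat -> nat) (n : nat) (A : 'I_n -> seq int) :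
  increasing r -> sparse r -> (0 < n)%N ->
  (forall i, ~ op_eq0 r (A i)) ->
  exists D0 : nat, forall D : nat, (D0 <= D)%N ->
    (forall z w : 'I_n -> nat, inRnD r D z -> inRnD r D w ->
      forall e : 'I_n, (forall i : 'I_n, (i < e)%N -> z i = w i) -> z e <> w e ->
      (dotA r A w < dotA r A z <->
        ((r (w e) < r (z e))%N /\ op_pos r (A e)) \/
        ((r (z e) < r (w e))%N /\ op_neg r (A e)))) /\
    (forall z w : 'I_n -> nat, inRnD r D z -> inRnD r D w ->
      dotA r A z = dotA r A w -> forall i, z i = w i).
Proof.
move=> Hr Hsp Hn HA.
pose Kc := (\sum_(i < n) Cop (A i))%N.
pose M := (\sum_(i < n) size (A i))%N.
have Hb : forall i x, `|apply_op r (A i) x| <= Kc%:Z * (r (x + M)%N)%:Z.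
  move=> i x; apply: le_trans (@norm_apply r Hr (A i) x) _.
  apply: ler_pM => //; rewrite lez_nat.
  - by rewrite /Kc (bigD1 i) //= leq_addr.
  - by apply: (@r_mono r Hr); rewrite leq_add2l /M (bigD1 i) //= leq_addr.
have Hsgn : forall i, op_pos r (A i) \/ op_neg r (A i).
  move=> i; have [[H|H] _] := Hsp (A i); [by case: (HA i)|exact: H].
have [T HT] : exists T, forall i, (op_pos r (A i) -> G r n Kc (A i) T) /\
    (op_neg r (A i) -> G r n Kc (negop (A i)) T).
  apply: fin_all.
  - move=> i T T' [H1 H2] HTT; split => H.
    + exact: G_mono Hr (H1 H) HTT.
    + exact: G_mono Hr (H2 H) HTT.
  - move=> i; case: (Hsgn i) => H.
    + have [T HT] := @G_ex r n Kc _ Hr Hsp H.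
      exists T; split=> // H'; exfalso; exact: (@pos_neg_excl r _ H H').
    + have [T HT] := @G_ex r n Kc _ Hr Hsp (@neg_pos r _ H).
      exists T; split=> // H'; exfalso; exact: (@pos_neg_excl r _ H' H).
exists (T + M).+1 => D HD.
have HTMD : (T + M < D)%N by [].
have K := fun e z w => @key r n A Kc M T D e z w Hr Hb (proj1 (HT e)) (proj2 (HT e)) HTMD.
split.
- move=> z w Hz Hw e Hag Hne.
  rewrite !(@r_ltP r Hr).
  case: (ltngtP (z e) (w e)) => [Hlt|Hlt|Heq]; last by [].
  + have [Kp Kn] := K e w z Hw Hz (fun i Hi => esym (Hag i Hi)) Hlt.
    split.
    * move=> Hd; right; split=> //; case: (Hsgn e) => // Hp; exfalso.
      by move: (Kp Hp) Hd; move: (dotA r A z) (dotA r A w) => p q; lia.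
    * case=> [[H1 _]|[_ Hn']]; [lia | exact: Kn Hn'].
  + have [Kp Kn] := K e z w Hz Hw Hag Hlt.
    split.
    * move=> Hd; left; split=> //; case: (Hsgn e) => // Hn'; exfalso.
      by move: (Kn Hn') Hd; move: (dotA r A z) (dotA r A w) => p q; lia.
    * case=> [[_ Hp]|[H1 _]]; [exact: Kp Hp | lia].
- move=> z w Hz Hw Heq i.
  case: (eqVneq (z i) (w i)) => // Hzw; exfalso.
  have Hex : exists k, [exists j : 'I_n, (val j == k) && (z j != w j)].
    by exists (val i); apply/existsP; exists i; rewrite eqxx Hzw.
  case: (ex_minnP Hex) => k /existsP [e /andP [/eqP Ek Hne]] Hmin.
  have Hag : forall j : 'I_n, (j < e)%N -> z j = w j.
    move=> j Hj; case: (eqVneq (z j) (w j)) => // Hj'.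
    have : (k <= val j)%N by apply: Hmin; apply/existsP; exists j; rewrite eqxx Hj'.
    by rewrite -Ek => H; move: (leq_trans Hj H); rewrite ltnn.
  case: (ltngtP (z e) (w e)) => [Hlt|Hlt|Heq']; last by move: Hne; rewrite Heq' eqxx.
  + have [Kp Kn] := K e w z Hw Hz (fun i Hi => esym (Hag i Hi)) Hlt.
    by case: (Hsgn e) => H; [have := Kp H|have := Kn H]; rewrite Heq ltxx.
  + have [Kp Kn] := K e z w Hz Hw Hag Hlt.
    by case: (Hsgn e) => H; [have := Kp H|have := Kn H]; rewrite Heq ltxx.
Qed.
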